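(* Let $V$ be a Banach $\mathbb O$-bimodule and $T\in\mathscr B_{\mathcal{RO}}(V)$. The following are equivalent: (1) $[T,T^{\circledcirc n},x]_{\circledcirc}=0$ for all $x\in V$ and all $n=0,1,2,\dots$; (2) $T^n\in\mathscr B_{\mathcal{RO}}(V)$ for all $n=0,1,2,\dots$; (3) $[T^{n\circledcirc},T,x]_{\circledcirc}=0$ for all $x\in V$ and all $n=0,1,2,\dots$. Moreover, under any of these conditions $T^{\circledcirc n}=T^n=T^{n\circledcirc}$ for all $n$, and hence $T^n\circledcirc T^m=T^{n+m}$.
   Context: $\mathbb O$ is the real octonion algebra with basis $e_0=1,\dots,e_7$ and conjugation $\bar x$. An $\mathbb O$-bimodule is a real vector space $M$ with real-bilinear left and right multiplications by $\mathbb O$ (with $1x=x1=x$) whose associators $[p,q,x]=(pq)x-p(qx)$, $[p,x,q]=(px)q-p(xq)$, $[x,p,q]=(xp)q-x(pq)$ satisfy $[p,q,x]=[q,x,p]=[x,p,q]=-[q,p,x]$. Its real part is $\operatorname{Re}M=\{m: pm=mp,\ [p,q,m]=0\ \forall p,q\}$; every $x$ decomposes uniquely as $x=\sum_{i=0}^7e_ix_i$ with $x_i\in\operatorname{Re}M$ and $\operatorname{Re}x:=x_0$. A Banach $\mathbb O$-bimodule is one with a complete norm with $\|px\|=\|xp\|=|p|\|x\|$. $\mathscr B_{\mathbb R}(V)$: bounded real-linear operators, powers $T^n$ by ordinary composition, $T^0=\mathcal I$. For real-linear $f$, $B_p(f,x)=f(x)p-f(xp)$; $f$ is right para-linear if $\operatorname{Re}B_p(f,x)=0$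 for all $p\in\mathbb O,x$; $\mathscr B_{\mathcal{RO}}(V)$ is the set of bounded right para-linear operators. For real-linear $h:\operatorname{Re}V\to V$, $(\operatorname{ext}h)(\sum_ix_ie_i)=\sum_ih(x_i)e_i$ ($x_i\in\operatorname{Re}V$); for real-linear $h:V\to\operatorname{Re}V$, $(\operatorname{lif}h)(x)=\sum_{i=0}^7h(x\bar e_i)e_i$. $T^{\circledcirc n}=\operatorname{ext}(T^n|_{\operatorname{Re}V})$, $T^{n\circledcirc}=\operatorname{lif}(\operatorname{Re}\circ T^n)$. For $f,g\in\mathscr B_{\mathcal{RO}}(V)$: $f\circledcirc g=\operatorname{ext}((f\circ g)|_{\operatorname{Re}V})$ (equivalently $\operatorname{lif}(\operatorname{Re}\circ f\circ g)$) and $[f,g,x]_{\circledcirc}=(f\circledcirc g)(x)-f(g(x))$. *)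

(* Defs.v *)
From HB Require Import structures.
From mathcomp Require Import all_boot all_order all_algebra.
From mathcomp Require Import all_classical all_reals all_analysis.
From Stdlib Require Import ClassicalEpsilon.
Set Implicit Arguments. Unset Strict Implicit. Unset Printing Implicit Defensive.
Import Order.TTheory GRing.Theory Num.Theory.
Import numFieldNormedType.Exports.
Local Open Scope ring_scope.

(* The real octonion algebra O over a real type R, as row vectors of   *)
(* coordinates w.r.t. the basis e_0 = 1, e_1, ..., e_7.                *)
(* Multiplication table (Baez's convention): the 7 oriented lines      *)
(* (i, i+1, i+3) mod 7, i.e. e_a e_b = e_c, e_b e_c = e_a, e_c e_a = e_b *)
(* and anticommutation; e_i e_i = -1 for i >= 1.                        *)

Definition oct_lines : seq (nat * nat * nat) :=
  [:: (1,2,4); (2,3,5); (3,4,6); (4,5,7); (5,6,1); (6,7,2); (7,1,3)]%N.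

(* e_i e_j = (-1)^(fst) e_(snd)  *)
Definition oct_tab (i j : nat) : bool * nat :=
  if i == 0%N then (false, j)
  else if j == 0%N then (false, i)
  else if i == j then (true, 0%N)
  else foldr (fun (l : nat * nat * nat) acc =>
         let: (a, b, c) := l in
         if (i, j) == (a, b) then (false, c)
         else if (i, j) == (b, c) then (false, a)
         else if (i, j) == (c, a) then (false, b)
         else if (i, j) == (b, a) then (true, c)
         else if (i, j) == (c, b) then (true, a)
         else if (i, j) == (a, c) then (true, b)
         else acc) (false, 0%N) oct_lines.

Section Octonions.
Variable R : realType.

Definition oct := 'rV[R]_8.

Definition ocoef (p : oct) (i : 'I_8) : R := p ord0 i.

Definition obasis (i : 'I_8) : oct := \row_(j < 8) (j == i)%:R.

Definition omul (p q : oct) : oct :=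
  \row_(k < 8) \sum_(i < 8) \sum_(j < 8)
     (if (oct_tab i j).2 == (k : nat)
      then (-1) ^+ (oct_tab i j).1 * (ocoef p i * ocoef q j) else 0).

Definition oconj (p : oct) : oct :=
  \row_(j < 8) (if (j : nat) == 0%N then ocoef p j else - ocoef p j).

Definition onorm (p : oct) : R := Num.sqrt (\sum_(i < 8) ocoef p i ^+ 2).

End Octonions.

Section Bimodule.
Variables (R : realType) (V : completeNormedModType R).
Variables (lm : oct R -> V -> V) (rm : V -> oct R -> V).

Definition lassoc (p q : oct R) (x : V) : V := lm (omul p q) x - lm p (lm q x).
Definition massoc (p : oct R) (x : V) (q : oct R) : V := rm (lm p x) q - lm p (rm x q).
Definition rassoc (x : V) (p q : oct R) : V := rm (rm x p) q - rm x (omul p q).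

Definition is_real_elt (m : V) : Prop :=
  (forall p, lm p m = rm m p) /\ (forall p q, lassoc p q m = 0).

Definition is_decomp (x : V) (xs : 'I_8 -> V) : Prop :=
  (forall i, is_real_elt (xs i)) /\ x = \sum_(i < 8) lm (obasis R i) (xs i).

Definition is_Banach_OBimodule : Prop :=
  ((forall (a : R) p q x, lm (a *: p + q) x = a *: lm p x + lm q x) /\
   (forall p (a : R) x y, lm p (a *: x + y) = a *: lm p x + lm p y) /\
   (forall (a : R) x y p, rm (a *: x + y) p = a *: rm x p + rm y p) /\
   (forall x (a : R) p q, rm x (a *: p + q) = a *: rm x p + rm x q)) /\
  (forall x, lm (obasis R 0) x = x /\ rm x (obasis R 0) = x) /\
  (forall p q x, lassoc p q x = massoc q x p /\ massoc q x p = rassoc x p q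
                 /\ rassoc x p q = - lassoc q p x) /\
  (* ||px|| = ||xp|| = |p| ||x||  (completeness of the norm: V is a completeNormedModType) *)
  (forall p x, (`|lm p x| = onorm p * `|x|) /\ (`|rm x p| = onorm p * `|x|)) /\
  (forall x, (exists xs, is_decomp x xs) /\
             (forall xs ys, is_decomp x xs -> is_decomp x ys -> forall i, xs i = ys i)).

(* the (chosen) real components x_i of x; unique under the axioms *)
Definition rcomp (x : V) : 'I_8 -> V :=
  epsilon (inhabits (fun _ => 0)) (fun xs => is_decomp x xs).

Definition ReV (x : V) : V := rcomp x 0.

Definition is_bounded_linear (f : V -> V) : Prop :=
  (forall (a : R) x y, f (a *: x + y) = a *: f x + f y) /\
  (exists C : R, forall x, `|f x| <= C * `|x|).

Definition Bp (f : V -> V) (p : oct R) (x : V) : V := rm (f x) p - f (rm x p).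

Definition is_BRO (f : V -> V) : Prop :=
  is_bounded_linear f /\ (forall p x, ReV (Bp f p x) = 0).

Definition oext (h : V -> V) (x : V) : V :=
  \sum_(i < 8) rm (h (rcomp x i)) (obasis R i).

Definition olif (h : V -> V) (x : V) : V :=
  \sum_(i < 8) rm (h (rm x (oconj (obasis R i)))) (obasis R i).

Definition circpow (T : V -> V) (n : nat) : V -> V := oext (iter n T).
Definition powcirc (T : V -> V) (n : nat) : V -> V := olif (ReV \o iter n T).

Definition ocirc (f g : V -> V) : V -> V := oext (f \o g).
Definition circ_assoc (f g : V -> V) (x : V) : V := ocirc f g x - f (g x).

End Bimodule.

(* Main.v *)
Require Import Defs.
From HB Require Import structures.
From mathcomp Require Import all_boot all_order all_algebra.
From mathcomp Require Import all_classical all_reals all_analysis.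
From Stdlib Require Import ClassicalEpsilon.
From mathcomp Require Import ring.
Import Order.TTheory GRing.Theory Num.Theory.
Import numFieldNormedType.Exports.
Local Open Scope ring_scope.

Lemma ord8P (P : nat -> bool) : all P (iota 0 8) -> forall i : 'I_8, P i.
Proof. by move=> /allP H i; apply: H; rewrite mem_iota ltn_ord. Qed.

Lemma mI8 (i : 'I_8) : (i : nat) \in iota 0 8.
Proof. by rewrite mem_iota ltn_ord. Qed.

Lemma ord8P2 (P : nat -> nat -> bool) :
  all (fun i => all (fun j => P i j) (iota 0 8)) (iota 0 8) -> forall i j : 'I_8, P i j.
Proof. move=> /allP H i j; have /allP := H i (mI8 i); apply; exact: mI8. Qed.

Lemma ord8P3 (P : nat -> nat -> nat -> bool) :
  all (fun i => all (fun j => all (fun k => P i j k) (iota 0 8)) (iota 0 8)) (iota 0 8) ->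
  forall i j k : 'I_8, P i j k.
Proof.
move=> /allP H i j k; have /allP H1 := H i (mI8 i).
have /allP := H1 j (mI8 j); apply; exact: mI8.
Qed.

Lemma tabB (i j : 'I_8) : ((oct_tab i j).2 < 8)%N.
Proof.
apply: (@ord8P2 (fun i j => (oct_tab i j).2 < 8)%N); vm_compute; reflexivity.
Qed.

Definition mi (i j : 'I_8) : 'I_8 := Ordinal (tabB i j).
Lemma mi_val i j : (mi i j : nat) = (oct_tab i j).2.
Proof. by []. Qed.
Lemma eq0_ord (x : 'I_8) : (0 == x) = ((x : nat) == 0%N).
Proof. by case: x => [[|m] Hm]. Qed.
Opaque oct_tab.

Section Octo.
Variable R : realType.
Local Notation e := (obasis R).

Definition sg (i j : 'I_8) : R := (-1) ^+ (oct_tab i j).1.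
Definition eps (k : 'I_8) : R := if (k : nat) == 0%N then 1 else -1.

Lemma omul_basis i j : omul (e i) (e j) = sg i j *: e (mi i j).
Proof.
apply/rowP => k; rewrite !mxE.
rewrite (bigD1 i) //= [X in _ + X]big1 ?addr0; last first.
  move=> i' ni; apply: big1 => j' _; rewrite /ocoef /obasis mxE (negbTE ni).
  by case: ifP; rewrite ?mul0r ?mulr0.
rewrite (bigD1 j) //= [X in _ + X]big1 ?addr0; last first.
  move=> j' nj; rewrite /ocoef !mxE eqxx (negbTE nj) !mulr0; by case: ifP.
rewrite /ocoef !mxE !eqxx !mulr1 /sg -val_eqE /mi /= eq_sym.
by case: eqP; rewrite ?mulr1 ?mulr0.
Qed.

Lemma omulZl (a : R) (p q : oct R) : omul (a *: p) q = a *: omul p q.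
Proof.
apply/rowP => k; rewrite !mxE big_distrr; apply: eq_bigr => i _.
rewrite big_distrr; apply: eq_bigr => j _; rewrite /ocoef !mxE.
by case: ifP => _; rewrite /= ?mulr0 //; ring.
Qed.

Lemma omulZr (a : R) (p q : oct R) : omul p (a *: q) = a *: omul p q.
Proof.
apply/rowP => k; rewrite !mxE big_distrr; apply: eq_bigr => i _.
rewrite big_distrr; apply: eq_bigr => j _; rewrite /ocoef !mxE.
by case: ifP => _; rewrite /= ?mulr0 //; ring.
Qed.

Lemma ocoef_e (i k : 'I_8) : ocoef (e i) k = (k == i)%:R.
Proof. by rewrite /ocoef mxE. Qed.

Lemma ocoefZ (a : R) (p : oct R) k : ocoef (a *: p) k = a * ocoef p k.
Proof. by rewrite /ocoef mxE. Qed.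

Lemma oct_exp (q : oct R) : q = \sum_(l < 8) ocoef q l *: e l.
Proof.
apply/rowP => k; rewrite summxE (bigD1 k) //= big1 ?addr0.
  by rewrite !mxE eqxx mulr1 /ocoef; congr (q _ _); apply: ord_inj; case: (ord0).
move=> l nl; rewrite !mxE eq_sym (negbTE nl) mulr0 //.
Qed.

Lemma oconj_basis i : oconj (e i) = eps i *: e i.
Proof.
apply/rowP => k; rewrite !mxE /ocoef !mxE /eps.
case: (eqVneq k i) => [->|nk]; first by case: ifP; rewrite ?mulr1 ?mulN1r.
by case: ifP; case: ifP; rewrite /= ?mulr0n ?mulr0 ?oppr0.
Qed.

Definition chkA (i j k : nat) : bool :=
  let t1 := oct_tab i j in let t2 := oct_tab t1.2 k in
  let t3 := oct_tab j k in let t4 := oct_tab i t3.2 in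
  ((t2.2 == 0) == (t4.2 == 0))%N && ((t2.2 == 0)%N ==> (addb t1.1 t2.1 == addb t3.1 t4.1)).

Lemma chkA_all (i j k : 'I_8) : chkA i j k.
Proof.
apply: (@ord8P3 chkA); vm_compute; reflexivity.
Qed.

End Octo.

Opaque oct_tab.
Section S2.
Variable R : realType.
Local Notation e := (obasis R).
Lemma signD (b1 b2 : bool) : (-1) ^+ b1 * (-1) ^+ b2 = (-1) ^+ (addb b1 b2) :> R.
Proof. by case: b1; case: b2; rewrite /= ?mulr1 ?mul1r ?mulrNN ?mulr1. Qed.

Lemma RA_gen (b1 b2 b3 b4 z1 z2 : bool) :
  (z1 == z2) && (z1 ==> (addb b1 b2 == addb b3 b4)) ->
  (-1)^+b1 * ((-1)^+b2 * z1%:R) = (-1)^+b3 * ((-1)^+b4 * z2%:R) :> R.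
Proof.
move=> /andP[/eqP <- H]; case: z1 H => /= [/eqP|_]; last by rewrite !mulr0.
by rewrite !mulr1 !signD => ->.
Qed.

Lemma RA_oct (i j k : 'I_8) :
  ocoef (omul (omul (e i) (e j)) (e k)) 0 = ocoef (omul (e i) (omul (e j) (e k))) 0.
Proof.
rewrite !omul_basis omulZl omulZr !omul_basis !ocoefZ !ocoef_e /sg.
rewrite (eq0_ord (mi (mi i j) k)) (eq0_ord (mi i (mi j k))).
rewrite !mi_val.
apply: RA_gen; exact: chkA_all.
Qed.

Definition chkE (i k : nat) : bool :=
  (((oct_tab i k).2 == 0) == (i == k))%N && ((i == k) ==> ((oct_tab i k).1 == (k != 0%N))).

Lemma chkE_all (i k : 'I_8) : chkE i k.
Proof. apply: (@ord8P2 chkE); vm_compute; reflexivity. Qed.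

Lemma E_gen (b z w c : bool) :
  (z == w) && (w ==> (b == c)) -> (-1) ^+ b * z%:R = w%:R * (if c then -1 else 1) :> R.
Proof. by move=> /andP[/eqP -> H]; case: w H => /= [/eqP ->|_]; rewrite ?mulr0 ?mul0r // mul1r mulr1; case: c. Qed.

Lemma E_oct (i k : 'I_8) : ocoef (omul (e i) (e k)) 0 = (i == k)%:R * eps R k.
Proof.
rewrite omul_basis ocoefZ ocoef_e /sg /eps eq0_ord mi_val -val_eqE.
have -> : (if (k : nat) == 0%N then 1 else -1) = (if (k : nat) != 0%N then -1 else 1 :> R).
  by case: ifP.
apply: E_gen; exact: chkE_all.
Qed.
End S2.

Opaque oct_tab.
Set Implicit Arguments. Unset Strict Implicit. Unset Printing Implicit Defensive.

Section Lin.
Variables (R : pzRingType) (U W : lmodType R) (g : U -> W).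
Hypothesis Hg : forall a x y, g (a *: x + y) = a *: g x + g y.
Lemma lin0 : g 0 = 0.
Proof.
have h := Hg 1 0 0; rewrite scale1r addr0 scale1r in h.
by apply: (@addrI _ (g 0)); rewrite addr0 -h.
Qed.
Lemma linD x y : g (x + y) = g x + g y.
Proof. by have := Hg 1 x y; rewrite !scale1r. Qed.
Lemma linZ a x : g (a *: x) = a *: g x.
Proof. by rewrite -[a *: x]addr0 Hg lin0 addr0. Qed.
Lemma linN x : g (- x) = - g x.
Proof. by rewrite -scaleN1r linZ scaleN1r. Qed.
Lemma linB x y : g (x - y) = g x - g y.
Proof. by rewrite linD linN. Qed.
Lemma lin_sum I (r : seq I) (P : pred I) F :
  g (\sum_(i <- r | P i) F i) = \sum_(i <- r | P i) g (F i).
Proof.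
apply: (big_ind2 (fun a b => g a = b)); first exact: lin0.
  by move=> x1 x2 y1 y2 h1 h2; rewrite linD h1 h2.
by [].
Qed.
End Lin.

Section Bim.
Variables (R : realType) (V : completeNormedModType R).
Variables (lm : oct R -> V -> V) (rm : V -> oct R -> V).
Hypothesis HB : is_Banach_OBimodule lm rm.
Local Notation e := (obasis R).
Local Notation c := (rcomp lm rm).
Local Notation real := (is_real_elt lm rm).

Lemma lmlp x : forall (a : R) p q, lm (a *: p + q) x = a *: lm p x + lm q x.
Proof. by case: HB => [[H _] _] a p q; apply: H. Qed.
Lemma lmlx p : forall (a : R) x y, lm p (a *: x + y) = a *: lm p x + lm p y.
Proof. by case: HB => [[_ [H _]] _]; apply: H. Qed.
Lemma rmlx p : forall (a : R) x y, rm (a *: x + y) p = a *: rm x p + rm y p.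
Proof. by case: HB => [[_ [_ [H _]]] _] a x y; apply: H. Qed.
Lemma rmlp x : forall (a : R) p q, rm x (a *: p + q) = a *: rm x p + rm x q.
Proof. by case: HB => [[_ [_ [_ H]]] _]; apply: H. Qed.

Lemma real0 : real 0.
Proof.
split=> [p|p q]; first by rewrite (lin0 (lmlx p)) (lin0 (rmlx p)).
by rewrite /lassoc !(lin0 (lmlx _)) subrr.
Qed.

Lemma realL (a : R) x y : real x -> real y -> real (a *: x + y).
Proof.
move=> [Hx1 Hx2] [Hy1 Hy2]; split=> [p|p q].
  by rewrite lmlx rmlx Hx1 Hy1.
have ex := Hx2 p q; have ey := Hy2 p q.
move: ex ey; rewrite /lassoc !lmlx => /subr0_eq -> /subr0_eq ->.
by rewrite subrr.
Qed.

Lemma real_sum I (r : seq I) (P : pred I) (F : I -> V) :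
  (forall i, P i -> real (F i)) -> real (\sum_(i <- r | P i) F i).
Proof.
move=> H; apply: big_ind => //; first exact: real0.
by move=> x y hx hy; rewrite -[x]scale1r; apply: realL.
Qed.

Lemma realZ (a : R) x : real x -> real (a *: x).
Proof. by move=> h; rewrite -[a *: x]addr0; apply: realL => //; apply: real0. Qed.

Lemma rmA_real r p q : real r -> rm (rm r p) q = rm r (omul p q).
Proof.
move=> [_ H]; case: HB => [_ [_ [HA _]]].
have [h1 [h2 _]] := HA p q r.
by apply/eqP; rewrite -subr_eq0 -[_ - _]/(rassoc rm r p q) -h2 -h1 H.
Qed.

Lemma decomp x : (forall i, real (c x i)) /\ x = \sum_(i < 8) rm (c x i) (e i).
Proof.
case: HB => [_ [_ [_ [_ HD]]]].
have [ex _] := HD x.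
have := epsilon_spec (inhabits (fun _ => 0)) (fun xs => is_decomp lm rm x xs) ex.
rewrite -/(rcomp lm rm x) => -[Hr Hx]; split=> //.
by rewrite {1}Hx; apply: eq_bigr => i _; case: (Hr i) => ->.
Qed.

Lemma coord (r : 'I_8 -> V) : (forall i, real (r i)) ->
  forall k, c (\sum_(i < 8) rm (r i) (e i)) k = r k.
Proof.
move=> Hr k; case: HB => [_ [_ [_ [_ HD]]]].
set x := \sum_(i < 8) _.
have [_ Hu] := HD x; apply: Hu; last first.
  split=> //; rewrite /x; apply: eq_bigr => i _; by case: (Hr i) => ->.
have [H1 H2] := decomp x; split=> //.
by rewrite {1}H2; apply: eq_bigr => i _; case: (H1 i) => ->.
Qed.

Lemma ext_coords z w : (forall k, c z k = c w k) -> z = w.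
Proof.
move=> H; rewrite [LHS](proj2 (decomp z)) [RHS](proj2 (decomp w)).
by apply: eq_bigr => i _; rewrite H.
Qed.

Lemma cL k : forall (a : R) x y, c (a *: x + y) k = a *: c x k + c y k.
Proof.
move=> a x y.
have [Hx Ex] := decomp x; have [Hy Ey] := decomp y.
have -> : a *: x + y = \sum_(i < 8) rm (a *: c x i + c y i) (e i).
  rewrite [in LHS]Ex [in LHS]Ey scaler_sumr -big_split /=.
  by apply: eq_bigr => i _; rewrite rmlx.
by rewrite coord // => i; apply: realL.
Qed.

Lemma rm_exp y q : rm y q = \sum_(l < 8) ocoef q l *: rm y (e l).
Proof. by rewrite {1}(oct_exp _ q) (lin_sum (rmlp y)); apply: eq_bigr => l _; rewrite (linZ (rmlp y)). Qed.

Lemma C0 (y : 'I_8 -> V) (q : 'I_8 -> oct R) : (forall i, real (y i)) ->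
  forall k, c (\sum_(i < 8) rm (y i) (q i)) k = \sum_(i < 8) ocoef (q i) k *: y i.
Proof.
move=> Hy k.
have -> : \sum_(i < 8) rm (y i) (q i) = \sum_(l < 8) rm (\sum_(i < 8) ocoef (q i) l *: y i) (e l).
  under [RHS]eq_bigr => l _ do rewrite (lin_sum (rmlx (e l))).
  rewrite exchange_big /=; apply: eq_bigr => i _; rewrite rm_exp.
  by apply: eq_bigr => l _; rewrite (linZ (rmlx _)).
by rewrite coord // => l; apply: real_sum => i _; apply: realZ.
Qed.

Lemma c_sum k I (r : seq I) (P : pred I) F :
  c (\sum_(i <- r | P i) F i) k = \sum_(i <- r | P i) c (F i) k.
Proof. exact: (lin_sum (cL k)). Qed.

Lemma cB k x y : c (x - y) k = c x k - c y k.
Proof. exact: (linB (cL k)). Qed.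
Lemma cZ k (a : R) x : c (a *: x) k = a *: c x k.
Proof. exact: (linZ (cL k)). Qed.

Lemma rm_dec y q : rm y q = \sum_(i < 8) rm (c y i) (omul (e i) q).
Proof.
have [Hy Ey] := decomp y.
rewrite {1}Ey (lin_sum (rmlx q)); apply: eq_bigr => i _.
exact: rmA_real.
Qed.

Lemma rm_dec_e y j : rm y (e j) = \sum_(i < 8) rm (c y i) (omul (e i) (e j)).
Proof. exact: rm_dec. Qed.

Lemma c0_rm_e y k : c (rm y (e k)) 0 = eps R k *: c y k.
Proof.
have [Hy _] := decomp y.
rewrite rm_dec_e C0 // (bigD1 k) //= big1 ?addr0.
  by rewrite E_oct eqxx mul1r.
by move=> i ni; rewrite E_oct (negbTE ni) mul0r scale0r.
Qed.

Lemma eps2 k : eps R k * eps R k = 1.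
Proof. by rewrite /eps; case: ifP; rewrite ?mulr1 ?mulrNN ?mulr1. Qed.

Lemma c_from_c0 y k : c y k = eps R k *: c (rm y (e k)) 0.
Proof. by rewrite c0_rm_e scalerA eps2 scale1r. Qed.

Lemma RA y j k : c (rm (rm y (e j)) (e k)) 0 = c (rm y (omul (e j) (e k))) 0.
Proof.
have [Hy Ey] := decomp y.
rewrite (rm_dec_e y j) (lin_sum (rmlx _)) (rm_dec y).
under eq_bigr => i _ do rewrite rmA_real //.
rewrite !C0 //; apply: eq_bigr => i _.
by rewrite RA_oct.
Qed.

Definition lin (f : V -> V) := forall (a : R) x y, f (a *: x + y) = a *: f x + f y.
Definition para (f : V -> V) := forall p x, Defs.ReV lm rm (Bp rm f p x) = 0.

Lemma para_eq f : lin f -> para f -> forall p x, c (rm (f x) p) 0 = c (f (rm x p)) 0.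
Proof. move=> Hf Hp p x; apply/eqP; rewrite -subr_eq0 -cB; apply/eqP; exact: (Hp p x). Qed.

Lemma K1 f : lin f -> para f -> forall x, oext lm rm f x = f x.
Proof.
move=> Hf Hp.
have step : forall r i, real r -> f (rm r (e i)) = rm (f r) (e i).
  move=> r i Hr; apply: ext_coords => k.
  rewrite (c_from_c0 (f _) k) (c_from_c0 (rm (f r) _) k); congr (_ *: _).
  by rewrite para_eq // (rmA_real _ _ Hr) RA para_eq.
move=> x; symmetry; rewrite {1}(proj2 (decomp x)) (lin_sum Hf) /oext.
apply: eq_bigr => i _; apply: step; exact: (proj1 (decomp x)).
Qed.

Lemma K2 f : lin f -> (forall x, oext lm rm f x = f x) -> para f.
Proof.
move=> Hf He p x; rewrite /Defs.ReV /Bp.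
have [Hx Ex] := decomp x.
rewrite (rm_exp (f x) p).
have -> : f (rm x p) = \sum_(l < 8) ocoef p l *: f (rm x (e l)).
  by rewrite rm_exp (lin_sum Hf); apply: eq_bigr => l _; rewrite (linZ Hf).
rewrite -sumrB c_sum big1 // => l _; rewrite -scalerBr cZ cB.
have E1 : f (rm x (e l)) = \sum_(i < 8) rm (f (c x i)) (omul (e i) (e l)).
  rewrite -He /oext.
  under eq_bigr => m _ do rewrite (rm_dec_e x l) C0 // (lin_sum Hf) (lin_sum (rmlx _)).
  rewrite exchange_big /=; apply: eq_bigr => i _; rewrite [RHS]rm_exp.
  by apply: eq_bigr => m _; rewrite (linZ Hf) (linZ (rmlx _)).
have key : c (rm (f x) (e l)) 0 = c (f (rm x (e l))) 0.
  rewrite E1 c_sum -{1}He /oext (lin_sum (rmlx _)) c_sum.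
  by apply: eq_bigr => i _; exact: RA.
by rewrite key subrr scaler0.
Qed.

Lemma Lif f : lin f -> para f -> forall x, olif rm (Defs.ReV lm rm \o f) x = f x.
Proof.
move=> Hf Hp x; rewrite /olif [RHS](proj2 (decomp (f x))); apply: eq_bigr => i _.
congr (rm _ _).
by rewrite /= /Defs.ReV oconj_basis (linZ (rmlp x)) (linZ Hf) cZ -para_eq // c0_rm_e scalerA eps2 scale1r.
Qed.

Lemma para_id : para id.
Proof. by move=> p x; rewrite /Defs.ReV /Bp subrr (lin0 (cL 0)). Qed.

Lemma lin_iter (T : V -> V) n : lin T -> lin (iter n T).
Proof. move=> HT; elim: n => [|n IH] a x y; first by []. by rewrite !iterS IH HT. Qed.

Lemma bl_iter (T : V -> V) : is_bounded_linear (R:=R) T -> forall n, is_bounded_linear (R:=R) (iter n T).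
Proof.
move=> [HT [C HC]] n; split; first exact: lin_iter.
pose C' := Num.max C 0.
have C'0 : 0 <= C' by rewrite le_max lexx orbT.
have HC' : forall x, `|T x| <= C' * `|x|.
  move=> x; apply: le_trans (HC x) _; apply: ler_wpM2r => //; by rewrite le_max lexx.
elim: n => [|n [D HD]]; first by exists 1 => x; rewrite mul1r.
exists (C' * D) => x /=; apply: le_trans (HC' _) _; rewrite -mulrA.
by apply: ler_wpM2l => //; exact: HD.
Qed.

End Bim.

Unset Implicit Arguments.
Set Strict Implicit.

Theorem mainTheorem2 (R : realType) (V : completeNormedModType R)
    (lm : oct R -> V -> V) (rm : V -> oct R -> V) (T : V -> V) :
  is_Banach_OBimodule lm rm ->
  is_BRO lm rm T ->
  let C1 := forall (n : nat) (x : V),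
      circ_assoc lm rm T (circpow lm rm T n) x = 0 in
  let C2 := forall n : nat, is_BRO lm rm (iter n T) in
  let C3 := forall (n : nat) (x : V),
      circ_assoc lm rm (powcirc lm rm T n) T x = 0 in
  ((C1 <-> C2) /\ (C2 <-> C3)) /\
  ((C1 \/ C2 \/ C3) ->
     (forall (n : nat) (x : V),
        circpow lm rm T n x = iter n T x /\ iter n T x = powcirc lm rm T n x) /\
     (forall (n m : nat) (x : V),
        ocirc lm rm (iter n T) (iter m T) x = iter (n + m) T x)).
Proof.
move=> HB HT; cbv zeta.
have lT : lin T := proj1 (proj1 HT).
pose P n := para lm rm (iter n T).
have BI : forall n, is_BRO lm rm (iter n T) <-> P n.
  move=> n; split; first by case.
  by move=> H; split=> //; apply: bl_iter; case: HT.
have Ka : forall n, P n -> forall x, oext lm rm (iter n T) x = iter n T x.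
  by move=> n H; apply: (K1 HB (lin_iter n lT) H).
have Kd : forall n, P n -> forall x, powcirc lm rm T n x = iter n T x.
  by move=> n H; apply: (Lif HB (lin_iter n lT) H).
have K2' : forall n, (forall x, oext lm rm (iter n T) x = iter n T x) -> P n.
  by move=> n H; apply: (K2 HB (lin_iter n lT) H).
have eS : forall n, iter n T \o T = iter n.+1 T.
  by move=> n; apply: funext => y; rewrite iterSr.
have C1P : (forall (n : nat) (x : V), circ_assoc lm rm T (circpow lm rm T n) x = 0) ->
    forall n, P n.
  move=> H1; elim=> [|n IH]; first exact: para_id.
  apply: K2' => x; have := H1 n x; rewrite /circ_assoc /ocirc /circpow.
  rewrite (funext (Ka n IH)) => /subr0_eq E; exact: E.
have PC1 : (forall n, P n) ->
    forall (n : nat) (x : V), circ_assoc lm rm T (circpow lm rm T n) x = 0.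
  move=> HP n x; rewrite /circ_assoc /ocirc /circpow (funext (Ka n (HP n))).
  have E := Ka n.+1 (HP n.+1) x; rewrite iterS in E.
  by rewrite -[T \o iter n T]/(iter n.+1 T) E subrr.
have C3P : (forall (n : nat) (x : V), circ_assoc lm rm (powcirc lm rm T n) T x = 0) ->
    forall n, P n.
  move=> H3; elim=> [|n IH]; first exact: para_id.
  apply: K2' => x; have := H3 n x; rewrite /circ_assoc /ocirc.
  rewrite (funext (Kd n IH)) eS iterSr => /subr0_eq E; exact: E.
have PC3 : (forall n, P n) ->
    forall (n : nat) (x : V), circ_assoc lm rm (powcirc lm rm T n) T x = 0.
  move=> HP n x; rewrite /circ_assoc /ocirc (funext (Kd n (HP n))) eS.
  by rewrite (Ka n.+1 (HP n.+1)) iterSr subrr.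
have C2P : (forall n, is_BRO lm rm (iter n T)) <-> forall n, P n.
  by split=> H n; apply/BI.
split.
  split; split.
  - by move=> H; apply/C2P; apply: C1P.
  - by move=> H; apply: PC1; apply/C2P.
  - by move=> H; apply: PC3; apply/C2P.
  - by move=> H; apply/C2P; apply: C3P.
move=> H.
have HP : forall n, P n.
  by case: H => [/C1P|[/C2P|/C3P]].
split.
  by move=> n x; split; [rewrite /circpow Ka | rewrite Kd].
move=> n m x; rewrite /ocirc.
have -> : iter n T \o iter m T = iter (n + m) T.
  by apply: funext => y; rewrite iterD.
exact: Ka.
Qed.
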